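(* Let $L$ be a (right) Leibniz algebra and $B\neq\{0\}$ an ideal of $L$. Let $P_0=a_ma_{m-1}\cdots a_2a_1$ be a right product of elements $a_1,\dots,a_m\in L$ such that at least $n\geq 1$ of the factors $a_i$ belong to $B$. Then $P_0\in B_n$, where $B_1=B$ and $B_k=B^k+\mathrm{Es}(B)$ for $k\geq 2$.
   Context: A (right) Leibniz algebra is a vector space $L$ over a field $F$ (characteristic $\neq 2$, finite-dimensional) with a bilinear product $(x,y)\mapsto xy$ satisfying $x(yz)=(xy)z-(xz)y$ for all $x,y,z\in L$. For subspaces $U,V$, $UV$ is the span of all $uv$. An ideal is a subspace $B$ with $LB\subseteq B$, $BL\subseteq B$. Right powers: $B^1=B$, $B^{k+1}=B^kB$. $\mathrm{Ess}(L)$ is the ideal generated by all squares $xx$, and $\mathrm{Es}(B)=B\cap\mathrm{Ess}(L)$. Right product: $a_ma_{m-1}\cdots a_1:=((\cdots((a_ma_{m-1})a_{m-2})\cdots)a_2)a_1$. *)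

(* Defs.v *)
From HB Require Import structures.
From mathcomp Require Import all_boot all_order all_algebra.
Set Implicit Arguments. Unset Strict Implicit. Unset Printing Implicit Defensive.
Import GRing.Theory.
Local Open Scope ring_scope.

Section LeibnizDefs.
Variables (F : fieldType) (L : vectType F) (mul : L -> L -> L).

Definition bilinear_prod : Prop :=
  (forall (a : F) (x y z : L), mul (a *: x + y) z = a *: mul x z + mul y z) /\
  (forall (a : F) (x y z : L), mul z (a *: x + y) = a *: mul z x + mul z y).

Definition right_leibniz : Prop :=
  forall x y z : L, mul x (mul y z) = mul (mul x y) z - mul (mul x z) y.

Definition spanP (S : L -> Prop) : L -> Prop :=
  fun x => forall W : {vspace L}, (forall y, S y -> y \in W) -> x \in W.

Definition prodP (U V : L -> Prop) : L -> Prop :=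
  spanP (fun z => exists u v, U u /\ V v /\ z = mul u v).

Definition is_ideal (W : {vspace L}) : Prop :=
  forall x w, w \in W -> mul x w \in W /\ mul w x \in W.

Definition Ess : L -> Prop :=
  fun x => forall W : {vspace L}, is_ideal W -> (forall y, mul y y \in W) -> x \in W.

Definition Es (B : {vspace L}) : L -> Prop := fun x => x \in B /\ Ess x.

(* rpow B k = B^(k+1) : B^1 = B, B^(k+1) = B^k B. *)
Fixpoint rpow (B : {vspace L}) (k : nat) : L -> Prop :=
  match k with
  | 0 => fun x => x \in B
  | k'.+1 => prodP (rpow B k') (fun x => x \in B)
  end.

Definition Bpow (B : {vspace L}) (k : nat) : L -> Prop := rpow B k.-1.

Definition Bsub (B : {vspace L}) (k : nat) : L -> Prop :=
  fun x : L => if (k <= 1)%N then (x \in B : Prop)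
  else (exists u v, Bpow B k u /\ Es B v /\ x = u + v).

(* Right product a_m a_{m-1} ... a_1 = ((..(a_m a_{m-1})..)a_2)a_1,
   for factors indexed a 1, ..., a m. *)
Definition rprod (a : nat -> L) (m : nat) : L :=
  foldl (fun p i => mul p (a i)) (a m) (rev (iota 1 m.-1)).

End LeibnizDefs.

(* Main.v *)
Require Import Defs.
From HB Require Import structures.
From mathcomp Require Import all_boot all_order all_algebra.
Import GRing.Theory.
Local Open Scope ring_scope.

Section Aux.
Variables (F : fieldType) (L : vectType F).

Lemma lin_end (f : L -> L) : linear f -> exists g : 'End(L), forall x, g x = f x.
Proof.
move=> lin_f.
pose flM := GRing.isLinear.Build _ _ _ _ f lin_f.
pose fL : {linear _ -> _} := HB.pack f flM.
by exists (linfun fL) => x; rewrite lfunE.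
Qed.

Lemma spanP_in (S : L -> Prop) x : S x -> spanP S x.
Proof. by move=> Sx W hW; apply: hW. Qed.

Lemma spanP_add (S : L -> Prop) x y : spanP S x -> spanP S y -> spanP S (x + y).
Proof. by move=> hx hy W hW; apply: memvD; [apply: hx | apply: hy]. Qed.

Lemma spanP_map (S T : L -> Prop) (f : L -> L) x : linear f ->
  spanP S x -> (forall y, S y -> spanP T (f y)) -> spanP T (f x).
Proof.
move=> lf hx hST W hW; have [g hg] := @lin_end f lf.
rewrite -hg memv_preim; apply: hx => y Sy.
by rewrite -memv_preim hg; apply: hST.
Qed.
End Aux.

Lemma foldl_map' (T U V : Type) (f : T -> U -> T) (g : V -> U) x s :
  foldl f x (map g s) = foldl (fun p i => f p (g i)) x s.
Proof. by elim: s x => //= y s IH x; rewrite IH. Qed.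


Theorem lemma4p2 (F : fieldType) (L : vectType F) (mul : L -> L -> L)
  (hchar : (2 \notin [pchar F])%N)
  (hbil : bilinear_prod mul) (hleib : right_leibniz mul)
  (B : {vspace L}) (hB : is_ideal mul B) (hB0 : B != 0%VS)
  (m n : nat) (a : nat -> L) (hn : (1 <= n)%N)
  (hcount : (n <= count (fun i => a i \in B) (iota 1 m))%N) :
  Bsub mul B n (rprod mul a m).
Proof.
move: (hbil); rewrite /bilinear_prod => -[bl br].
have addl x y z : mul (x + y) z = mul x z + mul y z.
  by have := bl 1 x y z; rewrite !scale1r.
have linr z : linear (fun x => mul x z) by move=> c x y; rewrite /= bl.
have R k x z : rpow mul B k x -> rpow mul B k (mul x z).
  elim: k x => [|k IH] x /=; first by move=> /(hB z) [].
  move=> hx; apply: (@spanP_map F L _ _ _ _ (linr z) hx) => y [u [v [hu [hv ->]]]].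
  have -> : mul (mul u v) z = mul u (mul v z) + mul (mul u z) v.
    by rewrite hleib subrK.
  apply: (@spanP_add F L); apply: (@spanP_in F L).
    by exists u, (mul v z); split => //; split => //; have [] := hB z v hv.
  by exists (mul u z), v; split => //; apply: IH.
have EsR v z : Es mul B v -> Es mul B (mul v z).
  move=> [hvB hvE]; split; first by have [] := hB z v hvB.
  move=> W hW hsq; have [] := hW z v (hvE W hW hsq) => //.
have Es0 : Es mul B 0 by split; [exact: mem0v | move=> W _ _; exact: mem0v].
have BsR k x z : Bsub mul B k x -> Bsub mul B k (mul x z).
  rewrite /Bsub; case: ifP => _.
    by move=> hx; have [] := hB z x hx.
  move=> [u [v [hu [hv ->]]]]; exists (mul u z), (mul v z).
  by rewrite addl; split; [apply: R | split => //; apply: EsR].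
have rprodS b k : rprod mul b k.+2 = mul (rprod mul (fun i => b i.+1) k.+1) (b 1%N).
  rewrite /rprod /= rev_cons foldl_rcons; congr mul.
  by rewrite -[2%N]/(1+1)%N iotaDl -map_rev foldl_map'.
have main : forall k (b : nat -> L) j, (1 <= j)%N ->
    (j <= count (fun i => b i \in B) (iota 1 k.+1))%N -> Bsub mul B j (rprod mul b k.+1).
  elim=> [|k IH] b j n1 hc.
    rewrite /= addn0 in hc; rewrite /Bsub /rprod /=.
    case h1: (b 1%N \in B) in hc; last by rewrite leqn0 in hc; rewrite (eqP hc) in n1.
    by have -> : (j <= 1)%N by [].
  rewrite rprodS.
  have hc' : (j <= (b 1%N \in B) + count (fun i => b i.+1 \in B) (iota 1 k.+1))%N.
    have E : iota 2 k.+1 = map (addn 1) (iota 1 k.+1) by rewrite -iotaDl.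
    have C p x s : count p (x :: s) = (p x + count p s)%N by [].
    by move: hc; rewrite -[iota 1 k.+2]/(1%N :: iota 2 k.+1) C E count_map.
  case h1: (b 1%N \in B) in hc'; last by apply: BsR; apply: IH.
  clear hc; case: j n1 hc' => [//|[|j]] _ hc'.
    by rewrite /Bsub /=; have [] := hB (rprod mul (fun i => b i.+1) k.+1) _ h1.
  have := IH (fun i => b i.+1) j.+1 isT hc'.
  rewrite /Bsub /=; case: j {hc'} => [|j] /=.
    move=> hP; exists (mul (rprod mul (fun i => b i.+1) k.+1) (b 1%N)), 0; rewrite addr0.
    split => //; apply: (@spanP_in F L).
    by eexists; eexists; split; [exact: hP|split; [exact: h1|reflexivity]].
  move=> [u [v [hu [hv ->]]]]; exists (mul u (b 1%N)), (mul v (b 1%N)); rewrite addl.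
  split; last by split => //; apply: EsR.
  apply: (@spanP_in F L).
  by exists u, (b 1%N); split => //.
case: m hcount => [|m] hcount; first by rewrite /= leqn0 in hcount; rewrite (eqP hcount) in hn.
exact: main.
Qed.
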